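(* Let $P$ be a finite point set in $\mathbb{S}^1$ containing a source $s$, with $|P|>2$, and let $\rho_{\mathrm{opt}}$ be an optimal range assignment for $P$. Then there exists a point $r\in\mathbb{S}^1$ such that $r\notin\mathrm{cov}(\rho_{\mathrm{opt}},P)$.
   Context: $\mathbb{S}^1$ is a circle with distance measured along the circle: $d(p,q)=\min(d_{\mathrm{cw}}(p,q),d_{\mathrm{ccw}}(p,q))$, where $d_{\mathrm{cw}},d_{\mathrm{ccw}}$ are clockwise and counterclockwise arc lengths. A range assignment $\rho$ gives each $p\in P$ a range $\rho(p)\ge0$, inducing a directed graph with edge $(p,q)$ iff $d(p,q)\le\rho(p)$; it is feasible if this graph contains an arborescence rooted at $s$ spanning $P$; its cost is $\sum_{p\in P}\rho(p)^\alpha$ for a fixed constant $\alpha>1$; an optimal assignment is a feasible one of minimum cost. The covered region $\mathrm{cov}(\rho,P)$ is the set of all $r\in\mathbb{S}^1$ such that there is $p\in P$ with $\rho(p)\ge d(p,r)$. *)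

(* Defs.v *)
From Stdlib Require Import Reals List.
Open Scope R_scope.

(* The circle S^1 of circumference L > 0 is modelled by the points x with
   0 <= x < L (arc-length coordinate). *)
Definition on_circle (L x : R) : Prop := 0 <= x < L.

Definition cdist (L p q : R) : R :=
  Rmin (Rabs (p - q)) (L - Rabs (p - q)).

Definition rpow (x alpha : R) : R := if Req_EM_T x 0 then 0 else Rpower x alpha.

Definition range_assignment (P : list R) (rho : R -> R) : Prop :=
  forall p, In p P -> 0 <= rho p.

Definition edge (L : R) (P : list R) (rho : R -> R) (p q : R) : Prop :=
  In p P /\ In q P /\ cdist L p q <= rho p.

Definition has_spanning_arborescence (L : R) (P : list R) (rho : R -> R) (s : R) : Prop :=
  exists par : R -> R,
    (forall p, In p P -> p <> s -> edge L P rho (par p) p) /\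
    (forall p, In p P -> exists k : nat, Nat.iter k par p = s).

Definition feasible (L : R) (P : list R) (s : R) (rho : R -> R) : Prop :=
  range_assignment P rho /\ has_spanning_arborescence L P rho s.

Definition cost (alpha : R) (P : list R) (rho : R -> R) : R :=
  fold_right Rplus 0 (map (fun p => rpow (rho p) alpha) P).

Definition optimal (L alpha : R) (P : list R) (s : R) (rho : R -> R) : Prop :=
  feasible L P s rho /\
  forall rho', feasible L P s rho' -> cost alpha P rho <= cost alpha P rho'.

Definition covered (L : R) (P : list R) (rho : R -> R) (r : R) : Prop :=
  exists p, In p P /\ cdist L p r <= rho p.

(* Main.v *)
Require Import Defs.
From Stdlib Require Import Reals List Lra Lia ClassicalEpsilon Classical.
Open Scope R_scope.

Ltac cd_solve :=
  unfold cdist, on_circle, Rmin, Rabs in *;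
  repeat match goal with
  | |- context[Rcase_abs ?x] => destruct (Rcase_abs x)
  | H: context[Rcase_abs ?x] |- _ => destruct (Rcase_abs x)
  | |- context[Rle_dec ?x ?y] => destruct (Rle_dec x y)
  | H: context[Rle_dec ?x ?y] |- _ => destruct (Rle_dec x y)
  end; lra.


Lemma cd_sym L (HL : 0 < L) p q : cdist L p q = cdist L q p.
Proof. cd_solve. Qed.

Lemma cd_nonneg L (HL : 0 < L) p q : on_circle L p -> on_circle L q -> 0 <= cdist L p q.
Proof. intros. cd_solve. Qed.

Lemma cd_half L (HL : 0 < L) p q : on_circle L p -> on_circle L q -> cdist L p q <= L/2.
Proof. intros. cd_solve. Qed.

Lemma cd_refl L (HL : 0 < L) p : cdist L p p = 0.
Proof. cd_solve. Qed.

Lemma cd_pos L (HL : 0 < L) p q : on_circle L p -> on_circle L q -> p <> q -> 0 < cdist L p q.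
Proof. intros. cd_solve. Qed.

Lemma cd_tri L (HL : 0 < L) x y t : on_circle L x -> on_circle L y -> on_circle L t ->
  cdist L x t <= cdist L x y + cdist L y t.
Proof. intros. cd_solve. Qed.

Lemma cd_antipode_uniq L (HL : 0 < L) p q q' : on_circle L p -> on_circle L q -> on_circle L q' ->
  cdist L p q = L/2 -> cdist L p q' = L/2 -> q = q'.
Proof. intros. cd_solve. Qed.

Lemma cd_antipode_sum L (HL : 0 < L) p c t : on_circle L p -> on_circle L c -> on_circle L t ->
  cdist L p c = L/2 -> cdist L p t + cdist L t c = L/2.
Proof. intros. cd_solve. Qed.

Lemma cd_far L (HL : 0 < L) p t e : on_circle L p -> on_circle L t -> 0 < e ->
  e < L/2 - cdist L p t ->
  exists y, on_circle L y /\ cdist L t y = e /\ cdist L p t < cdist L p y.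
Proof.
  intros Hp Ht He He2.
  destruct (Rle_dec p t); [destruct (Rle_dec (t - p) (L/2))|destruct (Rle_dec (p - t) (L/2))].
  1: destruct (Rlt_dec (t+e) L); [exists (t+e)| exists (t+e-L)].
  4: destruct (Rle_dec 0 (t-e)); [exists (t-e)| exists (t-e+L)].
  3: exists (t-e).
  6: exists (t+e).
  all: unfold cdist, on_circle, Rmin, Rabs in *; repeat match goal with | |- context[Rcase_abs ?x] => destruct (Rcase_abs x) | H: context[Rcase_abs ?x] |- _ => destruct (Rcase_abs x) | |- context[Rle_dec ?x ?y] => destruct (Rle_dec x y) | H: context[Rle_dec ?x ?y] |- _ => destruct (Rle_dec x y) end; try lra.
Qed.


Lemma Rpower_pos x a : 0 < Rpower x a.
Proof. unfold Rpower. apply exp_pos. Qed.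

Lemma rpow_nonneg x a : 0 <= rpow x a.
Proof. unfold rpow. destruct (Req_EM_T x 0). lra. left; apply Rpower_pos. Qed.

Lemma rpow_lt a b al : 0 < al -> 0 <= a < b -> rpow a al < rpow b al.
Proof.
  intros Hal [H1 H2]. unfold rpow.
  destruct (Req_EM_T a 0); destruct (Req_EM_T b 0); try lra.
  - apply Rpower_pos.
  - apply Rlt_Rpower_l; lra.
Qed.

Lemma rpow_le a b al : 0 < al -> 0 <= a <= b -> rpow a al <= rpow b al.
Proof.
  intros Hal [H1 H2]. destruct (Req_dec a b). subst; lra.
  left; apply rpow_lt; lra.
Qed.

Lemma rpow_max a b al : 0 <= a -> 0 <= b -> rpow (Rmax a b) al <= rpow a al + rpow b al.
Proof.
  intros. pose proof (rpow_nonneg a al). pose proof (rpow_nonneg b al).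
  unfold Rmax. destruct (Rle_dec a b); lra.
Qed.

Lemma rpow_superadd a b al : 0 < a -> 0 < b -> 1 < al ->
  rpow a al + rpow b al < rpow (a + b) al.
Proof.
  intros Ha Hb Hal. unfold rpow.
  destruct (Req_EM_T a 0); destruct (Req_EM_T b 0); destruct (Req_EM_T (a+b) 0); try lra.
  replace al with (1 + (al - 1)) by ring.
  rewrite !Rpower_plus, !Rpower_1 by lra.
  assert (Rpower a (al-1) < Rpower (a+b) (al-1)) by (apply Rlt_Rpower_l; lra).
  assert (Rpower b (al-1) < Rpower (a+b) (al-1)) by (apply Rlt_Rpower_l; lra).
  nra.
Qed.

Definition upd (rho : R -> R) (p a : R) : R -> R :=
  fun x => if Req_EM_T x p then a else rho x.

Lemma upd_eq rho p a : upd rho p a p = a.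
Proof. unfold upd. destruct (Req_EM_T p p); congruence. Qed.

Lemma upd_neq rho p a x : x <> p -> upd rho p a x = rho x.
Proof. unfold upd. destruct (Req_EM_T x p); congruence. Qed.

Lemma cost_cons al a Q rho : cost al (a :: Q) rho = rpow (rho a) al + cost al Q rho.
Proof. reflexivity. Qed.

Lemma cost_upd_notin al Q rho p a : ~ In p Q -> cost al Q (upd rho p a) = cost al Q rho.
Proof.
  induction Q; intros; auto.
  rewrite !cost_cons. rewrite IHQ by (simpl in *; tauto).
  rewrite upd_neq by (intro; subst; simpl in *; tauto). auto.
Qed.

Lemma cost_upd al Q rho p a : NoDup Q -> In p Q ->
  cost al Q (upd rho p a) = cost al Q rho - rpow (rho p) al + rpow a al.
Proof.
  induction 1; intros Hin. contradiction.
  rewrite !cost_cons. destruct Hin as [<-|Hin].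
  - rewrite cost_upd_notin by auto. rewrite upd_eq. ring.
  - rewrite IHNoDup by auto. rewrite upd_neq by (intro; subst; tauto). ring.
Qed.


Inductive reach (L : R) (P : list R) (s : R) (rho : R -> R) : R -> Prop :=
| reach0 : reach L P s rho s
| reachS x y : reach L P s rho x -> In x P -> In y P -> cdist L x y <= rho x -> reach L P s rho y.

Fixpoint reachn L P s rho (n : nat) (x : R) : Prop :=
  match n with
  | O => x = s
  | S n => reachn L P s rho n x \/
      exists z, reachn L P s rho n z /\ In z P /\ In x P /\ cdist L z x <= rho z
  end.

Section R1.
Variables (L : R) (P : list R) (s : R).

Lemma feas_reach rho : feasible L P s rho -> forall x, In x P -> reach L P s rho x.
Proof.
  intros [_ [par [H1 H2]]] x Hx. destruct (H2 x Hx) as [k Hk].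
  revert x Hx Hk. induction k; intros x Hx Hk.
  - simpl in Hk. subst. constructor.
  - destruct (Req_dec x s). rewrite H; apply reach0.
    rewrite Nat.iter_succ_r in Hk. destruct (H1 x Hx H) as [Hp [_ Hd]].
    apply (reachS _ _ _ _ (par x)); auto.
Qed.

Lemma reach_reachn rho x : reach L P s rho x -> exists n, reachn L P s rho n x.
Proof.
  induction 1. exists O. reflexivity.
  destruct IHreach as [n Hn]. exists (S n). simpl. right. exists x. auto.
Qed.

Lemma reachn_mono rho n m x : (n <= m)%nat -> reachn L P s rho n x -> reachn L P s rho m x.
Proof.
  induction 1; auto. intros. simpl. left. auto.
Qed.

Lemma reachn_in rho n x : In s P -> reachn L P s rho n x -> In x P.
Proof.
  intro Hs. revert x. induction n; simpl; intros x H. subst; auto.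
  destruct H as [H|[z [_ [_ [H _]]]]]; auto.
Qed.

Lemma min_level (Q : nat -> Prop) : (exists n, Q n) -> exists n, Q n /\ forall m, (m < n)%nat -> ~ Q m.
Proof.
  intros [n Hn]. apply NNPP. intro Hc.
  assert (forall k, forall m, (m <= k)%nat -> ~ Q m).
  { induction k; intros m Hm HQ.
    - apply Hc. exists m. split; auto. intros; lia.
    - destruct (Nat.eq_dec m (S k)).
      + subst. apply Hc. exists (S k). split; auto. intros m' Hm'. apply IHk. lia.
      + apply (IHk m); auto; lia. }
  apply (H n n); auto.
Qed.

Lemma reach_feas rho : In s P -> (forall x, In x P -> 0 <= rho x) ->
  (forall x, In x P -> reach L P s rho x) -> feasible L P s rho.
Proof.
  intros Hs Hnn Hr. split. exact Hnn.
  set (Q := fun x z => In z P /\ cdist L z x <= rho z /\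
         forall n, reachn L P s rho (S n) x -> reachn L P s rho n z).
  assert (Hex : forall x, In x P -> x <> s -> exists z, Q x z).
  { intros x Hx Hxs. destruct (min_level _ (reach_reachn _ _ (Hr x Hx))) as [n0 [Hn0 Hmin]].
    destruct n0. simpl in Hn0. congruence.
    simpl in Hn0. destruct Hn0 as [Hn0|[z [Hz1 [Hz2 [_ Hz3]]]]].
    - exfalso. apply (Hmin n0); auto.
    - exists z. split; auto. split; auto. intros n Hn.
      apply reachn_mono with n0; auto.
      destruct (Compare_dec.le_lt_dec n0 n); auto. exfalso. apply (Hmin (S n)); auto. lia. }
  exists (fun x => epsilon (inhabits s) (Q x)). split.
  - intros p Hp Hps. destruct (epsilon_spec (inhabits s) (Q p) (Hex p Hp Hps)) as [A [B _]].
    split; auto.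
  - intros p Hp. destruct (reach_reachn _ _ (Hr p Hp)) as [n Hn].
    clear Hp. revert p Hn. induction n; intros p Hn.
    + exists O. simpl in *. auto.
    + destruct (Req_dec p s). exists O. simpl; auto.
      assert (Hp : In p P) by (apply (reachn_in rho (S n)); auto).
      destruct (epsilon_spec (inhabits s) (Q p) (Hex p Hp H)) as [A [B C]].
      destruct (IHn _ (C n Hn)) as [k Hk]. exists (S k). rewrite Nat.iter_succ_r. exact Hk.
Qed.
End R1.


Lemma three_pts (P : list R) : NoDup P -> (2 < length P)%nat ->
  forall a b, exists t, In t P /\ t <> a /\ t <> b.
Proof.
  intros Hnd Hlen a b. apply NNPP. intro Hc.
  assert (incl P (a :: b :: nil)).
  { intros x Hx. destruct (Req_dec x a). left; auto. destruct (Req_dec x b). right; left; auto.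
    exfalso. apply Hc. exists x. auto. }
  pose proof (NoDup_incl_length Hnd H). simpl in H0. lia.
Qed.

Lemma exists_m L p (Q : list R) b : 0 < b ->
  exists m, 0 <= m < b /\ forall q, In q Q -> cdist L p q < b -> cdist L p q <= m.
Proof.
  intro Hb. induction Q as [|a Q IH].
  - exists 0. split. lra. intros q [].
  - destruct IH as [m [Hm1 Hm2]].
    destruct (Rlt_dec (cdist L p a) b).
    + exists (Rmax m (cdist L p a)). split.
      * unfold Rmax; destruct (Rle_dec m (cdist L p a)); lra.
      * intros q [<-|Hq] Hd. apply Rmax_r. eapply Rle_trans. apply Hm2; auto. apply Rmax_l.
    + exists m. split; auto. intros q [<-|Hq] Hd. contradiction. auto.
Qed.

Lemma exists_max L p c (Q : list R) : (exists q, In q Q /\ q <> c) ->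
  exists t, In t Q /\ t <> c /\ forall q, In q Q -> q <> c -> cdist L p q <= cdist L p t.
Proof.
  induction Q as [|a Q IH]; intros [q0 [Hq0 Hq0c]]. destruct Hq0.
  destruct (classic (exists q, In q Q /\ q <> c)) as [Hex|Hnex].
  - destruct (IH Hex) as [t [Ht1 [Ht2 Ht3]]].
    destruct (Req_dec a c).
    + exists t. split. right; auto. split; auto. intros q [<-|Hq] Hqc. contradiction. auto.
    + destruct (Rle_dec (cdist L p a) (cdist L p t)).
      * exists t. split. right; auto. split; auto. intros q [<-|Hq] Hqc; auto.
      * exists a. split. left; auto. split; auto. intros q [<-|Hq] Hqc. lra.
        specialize (Ht3 q Hq Hqc). lra.
  - destruct Hq0 as [<-|Hq0]. 2:{ exfalso; apply Hnex; eauto. }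
    exists a. split. left; auto. split; auto. intros q [<-|Hq] Hqc. lra.
    exfalso; apply Hnex; eauto.
Qed.

Lemma exists_delta L (rho : R -> R) t (Q : list R) :
  exists d, 0 < d /\ forall x, In x Q -> rho x < cdist L x t -> d < cdist L x t - rho x.
Proof.
  induction Q as [|a Q IH].
  - exists 1. split. lra. intros x [].
  - destruct IH as [d [Hd1 Hd2]].
    destruct (Rlt_dec (rho a) (cdist L a t)).
    + exists (Rmin d ((cdist L a t - rho a)/2)). split.
      * unfold Rmin; destruct (Rle_dec d ((cdist L a t - rho a)/2)); lra.
      * intros x [<-|Hx] Hlt.
        -- pose proof (Rmin_r d ((cdist L a t - rho a)/2)). lra.
        -- pose proof (Rmin_l d ((cdist L a t - rho a)/2)). specialize (Hd2 x Hx Hlt). lra.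
    + exists d. split; auto. intros x [<-|Hx] Hlt. contradiction. auto.
Qed.

Definition unr L P s rho x : bool :=
  if excluded_middle_informative (reach L P s rho x) then false else true.

Lemma filter_le {A} (f g : A -> bool) (Q : list A) :
  (forall x, In x Q -> f x = true -> g x = true) ->
  (length (filter f Q) <= length (filter g Q))%nat.
Proof.
  induction Q as [|a Q IH]; simpl; intros H. lia.
  destruct (f a) eqn:Ef; destruct (g a) eqn:Eg; simpl.
  - specialize (IH (fun x Hx => H x (or_intror Hx))). lia.
  - rewrite (H a (or_introl eq_refl) Ef) in Eg. discriminate.
  - specialize (IH (fun x Hx => H x (or_intror Hx))). lia.
  - apply IH. intros; auto.
Qed.

Lemma filter_lt {A} (f g : A -> bool) (Q : list A) :
  (forall x, In x Q -> f x = true -> g x = true) ->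
  (exists u, In u Q /\ f u = false /\ g u = true) ->
  (length (filter f Q) < length (filter g Q))%nat.
Proof.
  induction Q as [|a Q IH]; simpl; intros H [u [Hu1 [Hu2 Hu3]]]. destruct Hu1.
  destruct Hu1 as [<-|Hu1].
  - rewrite Hu2, Hu3. simpl. pose proof (filter_le f g Q (fun x Hx => H x (or_intror Hx))). lia.
  - assert (Hlt : (length (filter f Q) < length (filter g Q))%nat).
    { apply IH. intros; auto. exists u; auto. }
    destruct (f a) eqn:Ef; destruct (g a) eqn:Eg; simpl; try lia.
    rewrite (H a (or_introl eq_refl) Ef) in Eg. discriminate.
Qed.


Section Main.
Variables (L alpha : R) (P : list R) (s : R) (rho : R -> R).
Hypothesis HL : 0 < L.
Hypothesis Hal : 1 < alpha.
Hypothesis Hnd : NoDup P.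
Hypothesis Hon : forall p, In p P -> on_circle L p.
Hypothesis Hs : In s P.
Hypothesis Hlen : (2 < length P)%nat.
Hypothesis Hopt : optimal L alpha P s rho.

Lemma Hnn : forall x, In x P -> 0 <= rho x.
Proof. destruct Hopt as [[H _] _]. exact H. Qed.

Lemma Hreach : forall x, In x P -> reach L P s rho x.
Proof. destruct Hopt as [H _]. apply feas_reach. exact H. Qed.

Lemma reach_mono_except rho' p x : (forall y, y <> p -> rho y <= rho' y) ->
  reach L P s rho x -> reach L P s rho' x \/ reach L P s rho' p.
Proof.
  intros Hle. induction 1. left; apply reach0.
  destruct IHreach as [Hx|Hp]; [|right; auto].
  destruct (Req_dec x p). subst; right; auto.
  left. apply (reachS _ _ _ _ x); auto. specialize (Hle x H3). lra.
Qed.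

Lemma reach_red p m x : reach L P s (upd rho p m) p ->
  reach L P s rho x -> reach L P s (upd rho p m) x \/
  exists t, In t P /\ ~ reach L P s (upd rho p m) t /\ m < cdist L p t /\ cdist L p t <= rho p.
Proof.
  intros Hp. induction 1. left; apply reach0.
  destruct IHreach as [Hx|Ht]; [|right; auto].
  destruct (Req_dec x p).
  - subst. destruct (Rle_dec (cdist L p y) m).
    + left. apply (reachS _ _ _ _ p); auto. rewrite upd_eq. auto.
    + destruct (classic (reach L P s (upd rho p m) y)). left; auto.
      right. exists y. repeat split; auto. lra.
  - left. apply (reachS _ _ _ _ x); auto. rewrite upd_neq; auto.
Qed.

Lemma reach_self p m : 0 <= m -> m <= rho p -> In p P -> reach L P s (upd rho p m) p.
Proof.
  intros. destruct (reach_mono_except (upd rho p m) p p) as [H2|H2]; auto.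
  - intros y Hy. rewrite upd_neq; auto. lra.
  - apply Hreach; auto.
Qed.

Lemma reach_sub p m u mu x : m <= rho p ->
  ~ reach L P s (upd rho p m) u -> reach L P s (upd rho p m) x -> reach L P s (upd rho u mu) x.
Proof.
  intros Hm Hu. induction 1. apply reach0.
  assert (x <> u) by (intro; subst; contradiction).
  apply (reachS _ _ _ _ x); auto. rewrite upd_neq by auto.
  destruct (Req_dec x p). subst. rewrite upd_eq in H2. lra. rewrite upd_neq in H2; auto.
Qed.

Lemma infeasible_red p m : In p P -> 0 <= m < rho p ->
  exists x, In x P /\ ~ reach L P s (upd rho p m) x.
Proof.
  intros Hp Hm. apply NNPP. intro Hc.
  assert (Hf : feasible L P s (upd rho p m)).
  { apply reach_feas; auto.
    - intros x Hx. unfold upd. destruct (Req_EM_T x p). lra. apply Hnn; auto.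
    - intros x Hx. apply NNPP. intro. apply Hc. eauto. }
  destruct Hopt as [_ Hopt2]. specialize (Hopt2 _ Hf).
  rewrite cost_upd in Hopt2 by auto.
  assert (rpow m alpha < rpow (rho p) alpha) by (apply rpow_lt; lra). lra.
Qed.

Lemma tight_t p m : In p P -> 0 <= m < rho p ->
  (forall q, In q P -> cdist L p q < rho p -> cdist L p q <= m) ->
  exists t, In t P /\ ~ reach L P s (upd rho p m) t /\ cdist L p t = rho p.
Proof.
  intros Hp Hm Hmp. destruct (infeasible_red p m Hp Hm) as [x [Hx Hnx]].
  destruct (reach_red p m x (reach_self p m ltac:(lra) ltac:(lra) Hp) (Hreach x Hx)) as [H|[t [Ht1 [Ht2 [Ht3 Ht4]]]]].
  contradiction.
  exists t. repeat split; auto. destruct Ht4; auto. specialize (Hmp t Ht1 H). lra.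
Qed.

Lemma antipodal p c : In p P -> In c P -> cdist L p c = L/2 -> rho p = L/2 -> False.
Proof.
  intros Hp Hc Hpc Hrp.
  destruct (three_pts P Hnd Hlen p c) as [t0 [Ht0 [Ht0p Ht0c]]].
  destruct (exists_max L p c P) as [t [Ht [Htc Hmax]]]. exists t0; auto.
  assert (Hd0 : 0 < cdist L p t0) by (apply (cd_pos L HL); auto).
  pose proof (Hmax t0 Ht0 Ht0c) as Hd1.
  assert (Htp : t <> p) by (intro; subst; rewrite (cd_refl L HL) in Hd1; lra).
  assert (Htc' : 0 < cdist L t c) by (apply (cd_pos L HL); auto).
  pose proof (cd_antipode_sum L HL p c t (Hon p Hp) (Hon c Hc) (Hon t Ht) Hpc) as Hsum.
  set (X := Rmax (rho t) (cdist L t c)).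
  set (M := cdist L p t).
  set (rho' := upd (upd rho t X) p M).
  assert (HX : rho t <= X /\ cdist L t c <= X) by (split; [apply Rmax_l|apply Rmax_r]).
  assert (Hr'p : rho' p = M) by (unfold rho'; apply upd_eq).
  assert (Hr't : rho' t = X) by (unfold rho'; rewrite upd_neq, upd_eq; auto).
  assert (Hrp' : reach L P s rho' p).
  { destruct (reach_mono_except rho' p p) as [H|H]; auto.
    - intros y Hy. unfold rho'. rewrite upd_neq by auto. unfold upd.
      destruct (Req_EM_T y t). subst; lra. lra.
    - apply Hreach; auto. }
  assert (Hf : feasible L P s rho').
  { apply reach_feas; auto.
    - intros x Hx. unfold rho', upd. destruct (Req_EM_T x p). apply (cd_nonneg L HL); auto.
      destruct (Req_EM_T x t). pose proof (Hnn t Ht); lra. apply Hnn; auto.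
    - intros q Hq. assert (Hrt : reach L P s rho' t).
      { apply (reachS _ _ _ _ p); auto. rewrite Hr'p. unfold M; lra. }
      destruct (Req_dec q c).
      + subst. apply (reachS _ _ _ _ t); auto. rewrite Hr't. lra.
      + apply (reachS _ _ _ _ p); auto. rewrite Hr'p. apply Hmax; auto. }
  destruct Hopt as [_ Hopt2]. specialize (Hopt2 _ Hf).
  unfold rho' in Hopt2. rewrite cost_upd in Hopt2 by auto.
  rewrite cost_upd in Hopt2 by auto. rewrite upd_neq in Hopt2 by auto.
  pose proof (rpow_max (rho t) (cdist L t c) alpha (Hnn t Ht) ltac:(lra)).
  assert (HM0 : 0 < M) by (unfold M; lra).
  pose proof (rpow_superadd M (cdist L t c) alpha HM0 Htc' Hal).
  fold X in H. rewrite Hrp in Hopt2. fold M in Hsum. rewrite Hsum in H0. lra.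
Qed.

Lemma pos_range x : reach L P s rho x -> x = s \/ exists z, In z P /\ 0 < rho z.
Proof.
  induction 1. left; auto.
  destruct (Req_dec x y). subst; auto.
  right. exists x. split; auto. pose proof (cd_pos L HL x y (Hon x H0) (Hon y H1) H3). lra.
Qed.

Lemma desc : forall k p m, In p P -> 0 <= m < rho p ->
  (forall q, In q P -> cdist L p q < rho p -> cdist L p q <= m) ->
  length (filter (unr L P s (upd rho p m)) P) = k ->
  (forall y, on_circle L y -> covered L P rho y) -> False.
Proof.
  intros k; induction k as [k IH] using (well_founded_induction Wf_nat.lt_wf).
  intros p m Hp Hm Hmp Hk Hcov.
  destruct (tight_t p m Hp Hm Hmp) as [t [Ht [Hnt Hdt]]].
  destruct (classic (exists u, In u P /\ ~ reach L P s (upd rho p m) u /\ 0 < rho u))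
    as [[u [Hu [Hnu Hru]]]|Hno].
  - destruct (exists_m L u P (rho u) Hru) as [mu [Hmu Hmup]].
    apply (IH (length (filter (unr L P s (upd rho u mu)) P))) with u mu; auto.
    rewrite <- Hk. apply filter_lt.
    + intros x Hx. unfold unr.
      destruct (excluded_middle_informative (reach L P s (upd rho u mu) x)); try discriminate.
      destruct (excluded_middle_informative (reach L P s (upd rho p m) x)); auto.
      exfalso; apply n; apply (reach_sub p m u mu x); auto; lra.
    + exists u. split; auto. unfold unr.
      destruct (excluded_middle_informative (reach L P s (upd rho u mu) u)).
      2:{ exfalso. apply n. apply reach_self; auto; lra. }
      destruct (excluded_middle_informative (reach L P s (upd rho p m) u)). contradiction.
      auto.
  - assert (Hz : forall u, In u P -> ~ reach L P s (upd rho p m) u -> rho u = 0).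
    { intros u Hu Hnu. apply Rle_antisym. apply Rnot_lt_le. intro. apply Hno; eauto. apply Hnn; auto. }
    assert (Hpt : t <> p) by (intro; subst; rewrite (cd_refl L HL) in Hdt; lra).
    destruct (Req_dec (rho p) (L/2)). { apply (antipodal p t); auto; lra. }
    assert (Hlt : rho p < L/2) by (pose proof (cd_half L HL p t (Hon p Hp) (Hon t Ht)); lra).
    destruct (exists_delta L rho t P) as [d [Hd Hdd]].
    set (e := Rmin d ((L/2 - rho p)/2)).
    assert (He : 0 < e /\ e <= d /\ e < L/2 - cdist L p t).
    { unfold e, Rmin. destruct (Rle_dec d ((L/2 - rho p)/2)); lra. }
    destruct (cd_far L HL p t e (Hon p Hp) (Hon t Ht) ltac:(lra) ltac:(lra)) as [y [Hy [Hty Hpy]]].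
    destruct (Hcov y Hy) as [x [Hx Hxy]].
    destruct (Req_dec x p). { subst; lra. }
    pose proof (cd_sym L HL t y) as Hsy.
    destruct (Rlt_dec (rho x) (cdist L x t)).
    + specialize (Hdd x Hx r).
      pose proof (cd_tri L HL x y t (Hon x Hx) Hy (Hon t Ht)). lra.
    + destruct (classic (reach L P s (upd rho p m) x)).
      * apply Hnt. apply (reachS _ _ _ _ x); auto. rewrite upd_neq; auto. lra.
      * pose proof (Hz x Hx H1).
        pose proof (cd_tri L HL t x y (Hon t Ht) (Hon x Hx) Hy).
        pose proof (cd_sym L HL t x). lra.
Qed.

Lemma final : exists r, on_circle L r /\ ~ covered L P rho r.
Proof.
  apply NNPP; intro Hc.
  assert (Hcov : forall y, on_circle L y -> covered L P rho y).
  { intros y Hy. apply NNPP. intro. apply Hc. eauto. }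
  destruct (three_pts P Hnd Hlen s s) as [x [Hx [Hxs _]]].
  destruct (pos_range x (Hreach x Hx)) as [|[p [Hp Hrp]]]. contradiction.
  destruct (exists_m L p P (rho p) Hrp) as [m [Hm Hmp]].
  exact (desc _ p m Hp Hm Hmp eq_refl Hcov).
Qed.
End Main.



Theorem lemma3 (L alpha : R) (P : list R) (s : R) (rho_opt : R -> R) :
  0 < L -> 1 < alpha ->
  NoDup P -> (forall p, In p P -> on_circle L p) ->
  In s P -> (2 < length P)%nat ->
  optimal L alpha P s rho_opt ->
  exists r, on_circle L r /\ ~ covered L P rho_opt r.
Proof.
  intros. eapply final; eauto.
Qed.
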